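(* Let $f:\mathbb F_2^6\to\mathbb F_2$ be $f(x_1,\dots,x_6)=(x_2\oplus x_2x_5\oplus x_4x_5)x_6\oplus x_3x_5(1\oplus x_6)\oplus x_1(1\oplus x_5)(1\oplus x_6)$. Let $r\ge6$ be even, $n=r+2$. (i) Let $h_1,h_2,h_3,h_4:\mathbb F_2^r\to\mathbb F_2$ be plateaued functions with pairwise disjoint Walsh supports, where $h_1,h_2,h_3$ are $2$-plateaued and $h_4$ is $4$-plateaued, and let $\mathfrak f(x,y)=f(h_1(x),h_2(x),h_3(x),h_4(x),y_1,y_2)$ for $(x,y)\in\mathbb F_2^r\times\mathbb F_2^2$. Then $W_{\mathfrak f}(u,v)\in\{0,\pm2^{n/2},\pm2^{(n+2)/2}\}$ for all $(u,v)$. (ii) For $i=1,\dots,4$ let $h_{1,i},h_{2,i},h_{3,i},h_{4,i}:\mathbb F_2^r\to\mathbb F_2$ satisfy the hypotheses of (i) (for each fixed $i$), and let $\mathfrak f_i(x,y)=f(h_{1,i}(x),\dots,h_{4,i}(x),y_1,y_2)$. Assume further that $h_{4,1},\dots,h_{4,4}$ have pairwise disjoint Walsh supports, and that for each $p\in\{1,2,3\}$: $S_{h_{p,1}}=S_{h_{p,2}}=S_{h_{p,3}}=S_{h_{p,4}}$ and $h^*_{p,1}\oplus h^*_{p,2}\oplus h^*_{p,3}\oplus h^*_{p,4}=1$ on this common support. Then: (a) the sets $S^{[1]}_{\mathfrak f_i}=\{w\in\mathbb F_2^n:|W_{\mathfrak f_i}(w)|=2^{(n+2)/2}\}$, $i=1,\dots,4$,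 are pairwise disjoint; (b) the sets $S^{[2]}_{\mathfrak f_i}=\{w:|W_{\mathfrak f_i}(w)|=2^{n/2}\}$ are all equal to a common set $S$, and the functions $\mathfrak f^*_{[2],i}:S\to\mathbb F_2$ defined by $W_{\mathfrak f_i}(w)=2^{n/2}(-1)^{\mathfrak f^*_{[2],i}(w)}$ satisfy $\mathfrak f^*_{[2],1}\oplus\dots\oplus\mathfrak f^*_{[2],4}=1$ on $S$. *)

(* Defs.v *)
(* F_2 is modelled by bool (xor = addb), F_2^m by {ffun 'I_m -> bool}. *)
From HB Require Import structures.
From mathcomp Require Import all_boot all_order all_algebra.
Set Implicit Arguments. Unset Strict Implicit. Unset Printing Implicit Defensive.
Import Order.TTheory GRing.Theory Num.Theory.
Local Open Scope ring_scope.

Definition bvec (m : nat) := {ffun 'I_m -> bool}.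

Definition dotb (m : nat) (u x : bvec m) : bool :=
  \big[addb/false]_(i < m) (u i && x i).

Definition walsh (m : nat) (f : bvec m -> bool) (u : bvec m) : int :=
  \sum_(x : bvec m) (-1) ^+ (f x (+) dotb u x).

Definition wsupp (m : nat) (f : bvec m -> bool) : {set bvec m} :=
  [set u | walsh f u != 0].

Definition plateaued (m s : nat) (f : bvec m -> bool) : Prop :=
  forall u, walsh f u = 0 \/ `|walsh f u| = (2 ^ ((m + s)./2))%:Z.

(* dual on the support: W_f(u) = |W_f(u)| (-1)^{f*(u)} *)
Definition wdual (m : nat) (f : bvec m -> bool) (u : bvec m) : bool :=
  walsh f u < 0.

Definition f6 (x1 x2 x3 x4 x5 x6 : bool) : bool :=
  ((x2 (+) (x2 && x5) (+) (x4 && x5)) && x6)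
  (+) (x3 && x5 && ~~ x6)
  (+) (x1 && ~~ x5 && ~~ x6).

Definition xpart (r : nat) (w : bvec (r + 2)) : bvec r := [ffun i => w (lshift 2 i)].
Definition ypart (r : nat) (w : bvec (r + 2)) : bvec 2 := [ffun j => w (rshift r j)].

Definition fcomp (r : nat) (h1 h2 h3 h4 : bvec r -> bool) (w : bvec (r + 2)) : bool :=
  let x := xpart w in let y := ypart w in
  f6 (h1 x) (h2 x) (h3 x) (h4 x) (y ord0) (y (@Ordinal 2 1 isT)).

Definition hyp_i (r : nat) (h1 h2 h3 h4 : bvec r -> bool) : Prop :=
  plateaued 2 h1 /\ plateaued 2 h2 /\ plateaued 2 h3 /\ plateaued 4 h4 /\
  [disjoint wsupp h1 & wsupp h2] /\ [disjoint wsupp h1 & wsupp h3] /\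
  [disjoint wsupp h1 & wsupp h4] /\ [disjoint wsupp h2 & wsupp h3] /\
  [disjoint wsupp h2 & wsupp h4] /\ [disjoint wsupp h3 & wsupp h4].

(* Main.v *)
Require Import Defs.
From HB Require Import structures.
From mathcomp Require Import all_boot all_order all_algebra.
From mathcomp Require Import ring zify.
Import Order.TTheory GRing.Theory Num.Theory.
Local Open Scope ring_scope.
Set Implicit Arguments. Unset Strict Implicit.

Definition i1 : 'I_2 := @Ordinal 2 1 isT.

Lemma splitL m n (i : 'I_m) : split (lshift n i) = inl i.
Proof. exact: (@unsplitK m n (inl i)). Qed.
Lemma splitR m n (i : 'I_n) : split (rshift m i) = inr i.
Proof. exact: (@unsplitK m n (inr i)). Qed.

Definition jn (r : nat) (p : (bool * bool) * bvec r) : bvec (r + 2) :=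
  [ffun i => match split i with inl k => p.2 k | inr j => if j == ord0 then p.1.1 else p.1.2 end].

Definition jinv (r : nat) (z : bvec (r + 2)) : (bool * bool) * bvec r :=
  ((z (rshift r ord0), z (rshift r i1)), xpart z).

Lemma jnK r : cancel (@jn r) (@jinv r).
Proof.
move=> [[a b] x]; rewrite /jinv /jn /xpart !ffunE ?splitL ?splitR /=; congr (_, _).
by apply/ffunP=> i; rewrite !ffunE ?splitL ?splitR.
Qed.

Lemma jinvK r : cancel (@jinv r) (@jn r).
Proof.
move=> z; apply/ffunP=> i; rewrite /jinv /jn /xpart !ffunE.
have -> : z i = z (unsplit (split i)) by rewrite splitK.
case: (split i) => [k|j] /=; first by rewrite ffunE.
by case: j => [[|[|k]] Hk] //=; congr (z _); apply: val_inj.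
Qed.

Lemma dotb_jn r (w : bvec (r + 2)) p :
  dotb w (jn p) = dotb (xpart w) p.2 (+) (w (rshift r ord0) && p.1.1) (+) (w (rshift r i1) && p.1.2).
Proof.
rewrite /dotb big_split_ord /= -addbA; congr (_ (+) _).
  by apply: eq_bigr => i _; rewrite /jn /xpart !ffunE ?splitL ?splitR.
rewrite !big_ord_recr big_ord0 /= /jn !ffunE ?splitL ?splitR /=.
by congr (_ (+) _); congr (w _ && _); apply: val_inj.
Qed.

Lemma walsh_dec r (h1 h2 h3 h4 : bvec r -> bool) (w : bvec (r + 2)) :
  let u := xpart w in let v0 := w (rshift r ord0) in let v1 := w (rshift r i1) in
  walsh (fcomp h1 h2 h3 h4) w =
    walsh h1 u + (-1) ^+ v1 * walsh h2 u + (-1) ^+ v0 * walsh h3 u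
    + (-1) ^+ (v0 (+) v1) * walsh h4 u.
Proof.
move=> u v0 v1.
rewrite {1}/walsh (reindex (@jn r)) /=; last by exists (@jinv r) => z _; [apply: jnK | apply: jinvK].
rewrite -(pair_big xpredT xpredT (fun ab x => (-1) ^+ (fcomp h1 h2 h3 h4 (jn (ab, x)) (+) dotb w (jn (ab,x))) : int)) /=.
rewrite -(pair_big xpredT xpredT (fun a b => \sum_(x : bvec r) (-1) ^+ (fcomp h1 h2 h3 h4 (jn ((a,b), x)) (+) dotb w (jn ((a,b),x))) : int)) /=.
rewrite !big_bool /=.
have E : forall a b x, fcomp h1 h2 h3 h4 (jn ((a, b), x)) = f6 (h1 x) (h2 x) (h3 x) (h4 x) a b.
  move=> a b x; rewrite /fcomp /xpart /ypart !ffunE ?splitL ?splitR /=.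
  by congr f6; congr (_ _); apply/ffunP => i; rewrite !ffunE ?splitL ?splitR.
have G : forall (c : bool) (g : bvec r -> bool),
   \sum_(x : bvec r) ((-1) ^+ (g x (+) (dotb u x (+) c))) = (-1) ^+ c * walsh g u :> int.
  move=> c g; rewrite /walsh big_distrr /=; apply: eq_bigr => x _.
  by rewrite addbA signr_addb mulrC.
have T : forall a b, \sum_(x : bvec r) (-1) ^+ (fcomp h1 h2 h3 h4 (jn ((a,b),x)) (+) dotb w (jn ((a,b),x)))
   = (-1) ^+ ((v0 && a) (+) (v1 && b)) * walsh (fun x => f6 (h1 x) (h2 x) (h3 x) (h4 x) a b) u :> int.
  move=> a b; rewrite -G; apply: eq_bigr => x _; rewrite E dotb_jn /=; congr (_ ^+ _).
  by rewrite -!addbA.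
rewrite !T /=.
have WE : forall (f g : bvec r -> bool), (forall x, f x = g x) -> walsh f u = walsh g u.
  by move=> f g fg; apply: eq_bigr => x _; rewrite fg.
rewrite (@WE (fun x => f6 (h1 x) (h2 x) (h3 x) (h4 x) true true) h4); last by move=> x; rewrite /f6; case: (h1 x); case: (h2 x); case: (h3 x); case: (h4 x).
rewrite (@WE (fun x => f6 (h1 x) (h2 x) (h3 x) (h4 x) true false) h3); last by move=> x; rewrite /f6; case: (h1 x); case: (h2 x); case: (h3 x); case: (h4 x).
rewrite (@WE (fun x => f6 (h1 x) (h2 x) (h3 x) (h4 x) false true) h2); last by move=> x; rewrite /f6; case: (h1 x); case: (h2 x); case: (h3 x); case: (h4 x).
rewrite (@WE (fun x => f6 (h1 x) (h2 x) (h3 x) (h4 x) false false) h1); last by move=> x; rewrite /f6; case: (h1 x); case: (h2 x); case: (h3 x); case: (h4 x).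
rewrite !andbT !andbF /= expr0 mul1r addbF.
ring.
Qed.

Lemma walsh_dec' r (h1 h2 h3 h4 : bvec r -> bool) (w : bvec (r + 2)) :
  walsh (fcomp h1 h2 h3 h4) w =
    walsh h1 (xpart w) + (-1) ^+ w (rshift r i1) * walsh h2 (xpart w)
    + (-1) ^+ w (rshift r ord0) * walsh h3 (xpart w)
    + (-1) ^+ (w (rshift r ord0) (+) w (rshift r i1)) * walsh h4 (xpart w).
Proof. exact: walsh_dec. Qed.

Lemma disjN m (f g : bvec m -> bool) u :
  [disjoint wsupp f & wsupp g] -> walsh f u != 0 -> walsh g u = 0.
Proof.
move/pred0P/(_ u) => /=; rewrite !inE => D Nf; apply/eqP; move: D; rewrite Nf /=.
by move/negbT; rewrite negbK.
Qed.

Lemma disjN' m (f g : bvec m -> bool) u :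
  [disjoint wsupp f & wsupp g] -> walsh g u != 0 -> walsh f u = 0.
Proof. by rewrite disjoint_sym; apply: disjN. Qed.

Lemma walsh_case r (h1 h2 h3 h4 : bvec r -> bool) (w : bvec (r + 2)) :
  hyp_i h1 h2 h3 h4 ->
  let u := xpart w in
  walsh (fcomp h1 h2 h3 h4) w =
  if walsh h1 u != 0 then walsh h1 u
  else if walsh h2 u != 0 then (-1) ^+ w (rshift r i1) * walsh h2 u
  else if walsh h3 u != 0 then (-1) ^+ w (rshift r ord0) * walsh h3 u
  else (-1) ^+ (w (rshift r ord0) (+) w (rshift r i1)) * walsh h4 u.
Proof.
move=> [_ [_ [_ [_ [D12 [D13 [D14 [D23 [D24 D34]]]]]]]]] u.
rewrite walsh_dec' -/u.
case: ifPn => [N1|/negPn/eqP Z1].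
  by rewrite (disjN D12 N1) (disjN D13 N1) (disjN D14 N1) !mulr0 !addr0.
case: ifPn => [N2|/negPn/eqP Z2].
  by rewrite Z1 (disjN D23 N2) (disjN D24 N2) !mulr0 !addr0 add0r.
case: ifPn => [N3|/negPn/eqP Z3].
  by rewrite Z1 Z2 (disjN D34 N3) !mulr0 !addr0 add0r.
by rewrite Z1 Z2 Z3 !mulr0 !add0r.
Qed.

Lemma plat_val m s (f : bvec m -> bool) u : plateaued s f -> walsh f u != 0 ->
  walsh f u = (2 ^ ((m + s)./2))%:Z \/ walsh f u = - (2 ^ ((m + s)./2))%:Z.
Proof.
move=> /(_ u) [->|]; first by rewrite eqxx.
by move=> /eqP; rewrite eqr_norml => /andP [/orP [/eqP ->|/eqP ->] _] _; [left|right].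
Qed.

Lemma sign_val (x c : int) (b : bool) : x = c \/ x = - c ->
  (-1) ^+ b * x = c \/ (-1) ^+ b * x = - c.
Proof.
by case: b => [] [->|->]; rewrite ?expr1 ?expr0 ?mulN1r ?mul1r ?opprK; auto.
Qed.

Lemma sign_lt0 (x : int) (b : bool) : x != 0 -> ((-1) ^+ b * x < 0) = b (+) (x < 0).
Proof.
case: b => Nx /=; last by rewrite expr0 mul1r.
by rewrite expr1 mulN1r oppr_lt0 lt0r Nx /= ltNge negbK.
Qed.

Lemma sum4 (b : bool) (d : 'I_4 -> bool) :
  \big[addb/false]_(i < 4) (b (+) d i) = \big[addb/false]_(i < 4) d i.
Proof.
rewrite big_split /=; suff -> : \big[addb/false]_(i < 4) b = false by [].
by rewrite !big_ord_recr big_ord0 /=; case: b.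
Qed.

Lemma c2c4 r : (2 ^ ((r + 2)./2))%:Z != (2 ^ ((r + 4)./2))%:Z :> int.
Proof.
have -> : (r + 4 = (r + 2).+2)%N by rewrite !addnS.
rewrite /= expnS eqz_nat; have := expn_gt0 2 (r+2)./2; rewrite /=.
move: (2 ^ _)%N => k kp; apply/eqP => E; lia.
Qed.

Lemma plat_abs m s (f : bvec m -> bool) u : plateaued s f -> walsh f u != 0 ->
  `|walsh f u| = (2 ^ ((m + s)./2))%:Z.
Proof. by move=> /(_ u) [->|//]; rewrite eqxx. Qed.

Lemma abs_case r (h1 h2 h3 h4 : bvec r -> bool) (w : bvec (r + 2)) :
  hyp_i h1 h2 h3 h4 ->
  let u := xpart w in
  `|walsh (fcomp h1 h2 h3 h4) w| =
  if walsh h1 u != 0 then (2 ^ ((r + 2)./2))%:Z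
  else if walsh h2 u != 0 then (2 ^ ((r + 2)./2))%:Z
  else if walsh h3 u != 0 then (2 ^ ((r + 2)./2))%:Z
  else `|walsh h4 u|.
Proof.
move=> H u; rewrite walsh_case // -/u.
case: H => [P1 [P2 [P3 _]]].
case: ifPn => [N1|_]; first exact: plat_abs.
case: ifPn => [N2|_]; first by rewrite normrMsign; apply: plat_abs.
case: ifPn => [N3|_]; first by rewrite normrMsign; apply: plat_abs.
by rewrite normrMsign.
Qed.

Lemma c_neq0 k : (2 ^ k)%:Z != 0 :> int.
Proof. by rewrite eqz_nat expn_eq0. Qed.

Lemma S1_lem r (h1 h2 h3 h4 : bvec r -> bool) (w : bvec (r + 2)) :
  hyp_i h1 h2 h3 h4 ->
  `|walsh (fcomp h1 h2 h3 h4) w| == (2 ^ ((r + 4)./2))%:Z -> walsh h4 (xpart w) != 0.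
Proof.
move=> H; rewrite abs_case //.
have N := c2c4 r.
case: ifPn => _; first by rewrite (negbTE N).
case: ifPn => _; first by rewrite (negbTE N).
case: ifPn => _; first by rewrite (negbTE N).
apply: contraL => /eqP ->; rewrite normr0 eq_sym; exact: c_neq0.
Qed.

Lemma S2_lem r (h1 h2 h3 h4 : bvec r -> bool) (w : bvec (r + 2)) :
  hyp_i h1 h2 h3 h4 ->
  (`|walsh (fcomp h1 h2 h3 h4) w| == (2 ^ ((r + 2)./2))%:Z) =
  [|| walsh h1 (xpart w) != 0, walsh h2 (xpart w) != 0 | walsh h3 (xpart w) != 0].
Proof.
move=> H; rewrite abs_case //=.
case: ifPn => _; first by rewrite eqxx.
case: ifPn => _; first by rewrite eqxx.
case: ifPn => _; first by rewrite eqxx.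
case: H => [_ [_ [_ [P4 _]]]].
case: (P4 (xpart w)) => [->|->]; first by rewrite normr0 eq_sym (negbTE (c_neq0 _)).
by rewrite eq_sym (negbTE (c2c4 r)).
Qed.

Lemma inws m (f : bvec m -> bool) u : (u \in wsupp f) = (walsh f u != 0).
Proof. by rewrite inE. Qed.

Unset Implicit Arguments.

(* n = r + 2; n/2 = (r+2)./2, (n+2)/2 = (r+4)./2.
   In (ii), h p i stands for h_{p+1,i+1} (p, i : 'I_4). *)
Theorem mainTheorem8 :
  (forall (r : nat), ~~ odd r -> (6 <= r)%N ->
   forall h1 h2 h3 h4 : bvec r -> bool, hyp_i h1 h2 h3 h4 ->
   forall w : bvec (r + 2),
     walsh (fcomp h1 h2 h3 h4) w \in
       [:: 0; (2 ^ ((r + 2)./2))%:Z; - (2 ^ ((r + 2)./2))%:Z;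
              (2 ^ ((r + 4)./2))%:Z; - (2 ^ ((r + 4)./2))%:Z])
  /\
  (forall (r : nat), ~~ odd r -> (6 <= r)%N ->
   forall h : 'I_4 -> 'I_4 -> (bvec r -> bool),
     (forall i, hyp_i (h 0 i) (h 1 i) (h 2 i) (h 3 i)) ->
     (forall i j, i != j -> [disjoint wsupp (h 3 i) & wsupp (h 3 j)]) ->
     (forall p : 'I_4, (p < 3)%N ->
        (forall i, wsupp (h p i) = wsupp (h p 0)) /\
        (forall u, u \in wsupp (h p 0) ->
           \big[addb/false]_(i < 4) wdual (h p i) u = true)) ->
   let F i := fcomp (h 0 i) (h 1 i) (h 2 i) (h 3 i) in
   let S1 i := [set w | `|walsh (F i) w| == (2 ^ ((r + 4)./2))%:Z] in
   let S2 i := [set w | `|walsh (F i) w| == (2 ^ ((r + 2)./2))%:Z] in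
   (forall i j, i != j -> [disjoint S1 i & S1 j]) /\
   (exists S : {set bvec (r + 2)},
      (forall i, S2 i = S) /\
      (forall w, w \in S -> \big[addb/false]_(i < 4) wdual (F i) w = true))).
Proof.
split.
  move=> r _ _ h1 h2 h3 h4 H w.
  have [P1 [P2 [P3 [P4 _]]]] := H.
  rewrite walsh_case //= !inE.
  case: ifPn => [N1|_].
    by have [->|->] := plat_val P1 N1; rewrite eqxx ?orbT.
  case: ifPn => [N2|_].
    by have [->|->] := sign_val (w (rshift r i1)) (plat_val P2 N2); rewrite eqxx ?orbT.
  case: ifPn => [N3|_].
    by have [->|->] := sign_val (w (rshift r ord0)) (plat_val P3 N3); rewrite eqxx ?orbT.
  case: (eqVneq (walsh h4 (xpart w)) 0) => [->|N4]; first by rewrite mulr0 eqxx.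
  by have [->|->] := sign_val (w (rshift r ord0) (+) w (rshift r i1)) (plat_val P4 N4);
    rewrite eqxx ?orbT.
move=> r _ _ h Hi Hd Hs F S1 S2; split.
  move=> i j ij; apply/pred0P => w /=; rewrite /S1 /F !inE.
  apply/negbTE/negP => /andP [A B].
  have Ni := S1_lem (Hi i) A; have Nj := S1_lem (Hi j) B.
  by move: Nj; rewrite (disjN (Hd i j ij) Ni) eqxx.
exists (S2 0); split.
  move=> i; apply/setP => w; rewrite /S2 /F !inE !S2_lem // -!inws.
  by rewrite (proj1 (Hs 0 isT) i) (proj1 (Hs 1 isT) i) (proj1 (Hs 2 isT) i).
move=> w; rewrite /S2 /F inE S2_lem // -!inws => /or3P [A|A|A].
- have E : forall i, walsh (fcomp (h 0 i) (h 1 i) (h 2 i) (h 3 i)) w = walsh (h 0 i) (xpart w).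
    move=> i; have N : walsh (h 0 i) (xpart w) != 0 by rewrite -inws (proj1 (Hs 0 isT) i).
    by rewrite walsh_case //= N.
  rewrite (eq_bigr (fun i => wdual (h 0 i) (xpart w))); first exact: (proj2 (Hs 0 isT)).
  by move=> i _; rewrite /wdual E.
- have E : forall i, walsh (fcomp (h 0 i) (h 1 i) (h 2 i) (h 3 i)) w =
     (-1) ^+ w (rshift r i1) * walsh (h 1 i) (xpart w).
    move=> i; have N : walsh (h 1 i) (xpart w) != 0 by rewrite -inws (proj1 (Hs 1 isT) i).
    have [_ [_ [_ [_ [D12 [D13 [D14 [D23 [D24 D34]]]]]]]]] := Hi i.
    by rewrite walsh_case //= (disjN' D12 N) eqxx /= N.
  rewrite (eq_bigr (fun i => w (rshift r i1) (+) wdual (h 1 i) (xpart w))).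
    by rewrite sum4; exact: (proj2 (Hs 1 isT)).
  move=> i _; rewrite /wdual E sign_lt0 //.
  by rewrite -inws (proj1 (Hs 1 isT) i).
- have E : forall i, walsh (fcomp (h 0 i) (h 1 i) (h 2 i) (h 3 i)) w =
     (-1) ^+ w (rshift r ord0) * walsh (h 2 i) (xpart w).
    move=> i; have N : walsh (h 2 i) (xpart w) != 0 by rewrite -inws (proj1 (Hs 2 isT) i).
    have [_ [_ [_ [_ [D12 [D13 [D14 [D23 [D24 D34]]]]]]]]] := Hi i.
    by rewrite walsh_case //= (disjN' D13 N) (disjN' D23 N) eqxx /= N.
  rewrite (eq_bigr (fun i => w (rshift r ord0) (+) wdual (h 2 i) (xpart w))).
    by rewrite sum4; exact: (proj2 (Hs 2 isT)).
  move=> i _; rewrite /wdual E sign_lt0 //.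
  by rewrite -inws (proj1 (Hs 2 isT) i).
Qed.
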